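(* Consider a run of Algorithm 1 (described in the context) on the one-dimensional corrupted problem with absolute loss. For any interval $I_j$ appearing in the partition during the run: if $I_j$ is marked dubious, then $I_j$ is bisected after $O(\log T)$ queries on $I_j$; if $I_j$ is not marked dubious, then $I_j$ is bisected after $O(1)$ queries on $I_j$. Here a query on $I_j$ is a round in which $I_j$ is the partition interval containing the context, and the constants in $O(\cdot)$ are absolute.
   Context: Problem. Fix $L>0$ and $T\ge 2$. An adversary fixes an unknown $L$-Lipschitz $f:[0,1]\to[0,L]$. In each round $t=1,\dots,T$: the adversary chooses $x_t\in[0,1]$; the learner observes $x_t$ and guesses $q_t$; the adversary observes $q_t$ and sends $\sigma_t\in\{0,1\}$, equal to $\sigma(q_t-f(x_t))$ in uncorrupted rounds and $1-\sigma(q_t-f(x_t))$ in corrupted rounds, where $\sigma(u)=1$ if $u>0$ and $0$ if $u\le 0$; the adversary chooses adaptively which rounds to corrupt, at most $C$ in total ($C$ unknown to the learner). $\mathtt{len}(I)$ is the length of an interval $I$. $\mathtt{MidpointQuery}(I,Y)$, $Y=[a,b]$: guess $q=(a+b)/2$; if $\sigma_t=1$ return $Y\cap[0,q+L\,\mathtt{len}(I)]$, if $\sigma_t=0$ return $Y\cap[q-L\,\mathtt{len}(I),L]$. Algorithm 1. Maintain a partition of $[0,1]$ into intervals; each $I_j$ carries a checking interval $S_j$, range $Y_j$, and a ''dubious'' flag (initially unset). Initially: $8$ intervals of length $1/8$, each with $S_j=Y_j=[0,L]$. In round $t$, with $I_j$ the partition interval containing $x_t$: (i) if some endpoint of $S_j$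 has not been guessed in a round whose context lay in $I_j$, guess such an endpoint; if the guess was $\min(S_j)$ with $\sigma_t=1$ or $\max(S_j)$ with $\sigma_t=0$, mark $I_j$ dubious; once both endpoints have been queried, set $Y_j=[0,L]$ if dubious and otherwise $Y_j=[\min(S_j)-L\,\mathtt{len}(I_j),\max(S_j)+L\,\mathtt{len}(I_j)]\cap[0,L]$. (ii) Otherwise set $Y_j:=\mathtt{MidpointQuery}(I_j,Y_j)$; if then $\mathtt{len}(Y_j)<\max(4L\,\mathtt{len}(I_j),4L/T)$, bisect $I_j$ into its two halves, which replace it, each with checking interval equal to the current $Y_j$ (endpoints unqueried, not dubious). *)

(* Defs.v *)
From Stdlib Require Import Reals List Arith ZArith.
Open Scope R_scope.
Open Scope bool_scope.

Definition sig (u : R) : bool := if Rlt_dec 0 u then true else false.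
Definition Reqb (a b : R) : bool := if Req_dec_T a b then true else false.
Definition Rltb (a b : R) : bool := if Rlt_dec a b then true else false.

(* Dyadic intervals: node (k, i) is the interval [i/2^k, (i+1)/2^k]
   (half-open [i/2^k,(i+1)/2^k), except the last one which contains 1). *)
Definition node := (nat * nat)%type.
Definition node_eqb (a b : node) : bool :=
  Nat.eqb (fst a) (fst b) && Nat.eqb (snd a) (snd b).
Definition node_len (nd : node) : R := / (2 ^ fst nd).
Definition nfloor (y : R) : nat := Z.to_nat (up y - 1)%Z.
Definition idx (k : nat) (x : R) : nat := Nat.min (nfloor (x * 2 ^ k)) (2 ^ k - 1).
Definition contains (nd : node) (x : R) : bool := Nat.eqb (snd nd) (idx (fst nd) x).

(* closed intervals [a,b] represented by pairs (a,b) *)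
Definition ival := (R * R)%type.
Definition ilen (Y : ival) : R := snd Y - fst Y.

(* Per-interval data: checking interval S, range Y, which endpoints of S
   have been queried, dubious flag. *)
Record nodest := NodeSt { S_ : ival; Y_ : ival; qmin : bool; qmax : bool; dub : bool }.

(* The state: the current partition (list of active nodes) and the data of
   every node (kept after a node has been bisected). *)
Record state := State { part : list node; info : node -> nodest }.

Definition init_state (L : R) : state :=
  State (map (fun i => (3%nat, i)) (seq 0 8)) (fun _ => NodeSt (0, L) (0, L) false false false).

Definition cur (st : state) (x : R) : option node := find (fun nd => contains nd x) (part st).

Definition mid (Y : ival) : R := (fst Y + snd Y) / 2.
Definition midpoint_update (L lenI : R) (Y : ival) (s : bool) : ival :=
  let q := mid Y in
  if s then (fst Y, Rmin (snd Y) (q + L * lenI))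
  else (Rmax (fst Y) (q - L * lenI), snd Y).

Definition upd (info : node -> nodest) (nd : node) (r : nodest) : node -> nodest :=
  fun m => if node_eqb m nd then r else info m.

Definition range_after_check (L lenI : R) (S : ival) (d : bool) : ival :=
  if d then (0, L) else (Rmax 0 (fst S - L * lenI), Rmin L (snd S + L * lenI)).

Definition endpoint_update (L lenI : R) (r : nodest) (q : R) (s : bool) : nodest :=
  let S := S_ r in
  let qm := qmin r || Reqb q (fst S) in
  let qM := qmax r || Reqb q (snd S) in
  let d := dub r || (Reqb q (fst S) && s) || (Reqb q (snd S) && negb s) in
  let Y := if qm && qM then range_after_check L lenI S d else Y_ r in
  NodeSt S Y qm qM d.

Definition guess (st : state) (x : R) : R :=
  match cur st x with
  | None => 0
  | Some nd =>
      let r := info st nd in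
      if negb (qmin r) then fst (S_ r)
      else if negb (qmax r) then snd (S_ r)
      else mid (Y_ r)
  end.

Definition step (L : R) (T : nat) (st : state) (x : R) (s : bool) : state :=
  match cur st x with
  | None => st
  | Some nd =>
      let r := info st nd in
      let lenI := node_len nd in
      if negb (qmin r) then
        State (part st) (upd (info st) nd (endpoint_update L lenI r (fst (S_ r)) s))
      else if negb (qmax r) then
        State (part st) (upd (info st) nd (endpoint_update L lenI r (snd (S_ r)) s))
      else
        let Y' := midpoint_update L lenI (Y_ r) s in
        let r' := NodeSt (S_ r) Y' (qmin r) (qmax r) (dub r) in
        if Rltb (ilen Y') (Rmax (4 * L * lenI) (4 * L / INR T)) then
          let c1 := (S (fst nd), 2 * snd nd)%nat in
          let c2 := (S (fst nd), 2 * snd nd + 1)%nat in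
          let child := NodeSt Y' Y' false false false in
          State (c1 :: c2 :: filter (fun m => negb (node_eqb m nd)) (part st))
                (upd (upd (upd (info st) nd r') c1 child) c2 child)
        else State (part st) (upd (info st) nd r')
  end.

(* Feedback in round t: sigma(q_t - f(x_t)), flipped iff round t is corrupted
   (cs t = true). *)
Fixpoint run (L : R) (T : nat) (f : R -> R) (xs : nat -> R) (cs : nat -> bool)
  (n : nat) : state :=
  match n with
  | O => init_state L
  | S m =>
      let st := run L T f xs cs m in
      let q := guess st (xs m) in
      step L T st (xs m) (xorb (cs m) (sig (q - f (xs m))))
  end.

Fixpoint nqueries (L : R) (T : nat) (f : R -> R) (xs : nat -> R) (cs : nat -> bool)
  (nd : node) (n : nat) : nat :=
  match n with
  | O => O
  | S m =>
      nqueries L T f xs cs nd m +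
      (match cur (run L T f xs cs m) (xs m) with
       | Some nd' => if node_eqb nd' nd then 1 else 0
       | None => 0 end)
  end.

Definition is_active (st : state) (nd : node) : Prop := In nd (part st).

Fixpoint ncorrupt (cs : nat -> bool) (n : nat) : nat :=
  match n with O => O | S m => ncorrupt cs m + (if cs m then 1 else 0) end.

(* Main.v *)
Require Import Defs.
From Stdlib Require Import Reals List Lra Lia Arith.
Open Scope R_scope.

Definition Sb (L : R) (T : nat) (l : R) := Rmax (8*L*l) (4*L/INR T).
Definition th (L : R) (T : nat) (l : R) := Rmax (4*L*l) (4*L/INR T).

Definition NodeInv L T (r : nodest) (q : nat) (l : R) : Prop :=
  ilen (S_ r) <= Sb L T l /\
  (qmin r = false -> qmax r = false /\ q = 0%nat) /\
  (qmin r = true -> qmax r = false -> (q <= 1)%nat) /\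
  (qmin r = true -> qmax r = true ->
     (ilen (Y_ r) - 2*L*l) * 2^q <= 4 * (if dub r then L else Sb L T l) /\
     ((3 <= q)%nat -> th L T l <= ilen (Y_ r))).

Definition desc (m d : node) : Prop :=
  (fst m < fst d)%nat /\ Nat.div (snd d) (2 ^ (fst d - fst m))%nat = snd m.

Definition Inv_gen L T (st : state) (nq : node -> nat) : Prop :=
  (forall m d, In m (part st) -> desc m d -> nq d = 0%nat /\ ~ In d (part st)) /\
  (forall m, In m (part st) -> NodeInv L T (info st m) (nq m) (node_len m)).

Lemma node_eqb_spec a b : node_eqb a b = true <-> a = b.
Proof.
  destruct a as [a1 a2], b as [b1 b2]; unfold node_eqb; simpl.
  rewrite Bool.andb_true_iff, !Nat.eqb_eq. split; [intros [-> ->]; auto | intros H; inversion H; auto].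
Qed.

Lemma node_eqb_refl a : node_eqb a a = true.
Proof. apply node_eqb_spec; auto. Qed.

Lemma node_eqb_false a b : a <> b -> node_eqb a b = false.
Proof. intros H. destruct (node_eqb a b) eqn:E; auto. apply node_eqb_spec in E; tauto. Qed.

Lemma Reqb_refl a : Reqb a a = true.
Proof. unfold Reqb; destruct (Req_dec_T a a); auto; congruence. Qed.

Lemma node_len_pos nd : 0 < node_len nd.
Proof. unfold node_len. apply Rinv_0_lt_compat, pow_lt; lra. Qed.

Lemma INRT_pos T : (2 <= T)%nat -> 0 < INR T.
Proof. intros; apply lt_0_INR; lia. Qed.

Lemma after_check L T l S d q : 0 < L -> 0 < l -> (2 <= T)%nat ->
  ilen S <= Sb L T l -> (q <= 2)%nat ->
  (ilen (range_after_check L l S d) - 2*L*l) * 2^q <= 4 * (if d then L else Sb L T l).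
Proof.
  intros HL Hl HT HS Hq.
  assert (HT' := INRT_pos T HT).
  assert (Hg : ilen (range_after_check L l S d) - 2*L*l <= (if d then L else Sb L T l)).
  { destruct d; unfold range_after_check, ilen in *; simpl in *.
    - assert (0 <= L*l) by (apply Rmult_le_pos; lra). lra.
    - unfold Rmax, Rmin; destruct (Rle_dec 0 (fst S - L*l)); destruct (Rle_dec L (snd S + L*l)); lra. }
  assert (HG : 0 <= (if d then L else Sb L T l)).
  { destruct d; [lra|]. unfold Sb. eapply Rle_trans; [|apply Rmax_l].
    assert (0 < L*l) by (apply Rmult_lt_0_compat; lra). lra. }
  assert (Hp : 0 < 2^q) by (apply pow_lt; lra).
  assert (Hp4 : 2^q <= 4).
  { destruct q as [|[|[|]]]; simpl; try lra; lia. }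
  set (g := ilen (range_after_check L l S d) - 2*L*l) in *.
  set (G := (if d then L else Sb L T l)) in *.
  destruct (Rle_dec g 0).
  - nra.
  - nra.
Qed.

Lemma mid_len L l Y s : ilen (midpoint_update L l Y s) <= ilen Y / 2 + L * l.
Proof.
  unfold midpoint_update, mid, ilen; destruct s; simpl; unfold Rmin, Rmax;
  repeat match goal with |- context [Rle_dec ?a ?b] => destruct (Rle_dec a b) end; lra.
Qed.

Lemma ep1 L T r l s : 0 < L -> 0 < l -> (2 <= T)%nat -> NodeInv L T r 0 l -> qmin r = false ->
  NodeInv L T (endpoint_update L l r (fst (S_ r)) s) 1 l.
Proof.
  intros HL Hl HT [HS [H1 [H2 H3]]] Hq. destruct (H1 Hq) as [Hq2 _].
  unfold endpoint_update; rewrite Hq, Hq2, Reqb_refl; simpl.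
  split; [auto|]. split; [discriminate|]. split; [intros; lia|].
  intros _ HM. simpl in HM. rewrite HM. simpl. split.
  - apply (after_check L T l (S_ r) _ 1); auto.
  - intros; lia.
Qed.

Lemma ep2 L T r q l s : 0 < L -> 0 < l -> (2 <= T)%nat -> NodeInv L T r q l ->
  qmin r = true -> qmax r = false ->
  NodeInv L T (endpoint_update L l r (snd (S_ r)) s) (q+1) l.
Proof.
  intros HL Hl HT [HS [H1 [H2 H3]]] Hq HM. specialize (H2 Hq HM).
  unfold endpoint_update; rewrite Hq, HM, Reqb_refl; simpl.
  split; [auto|]. split; [discriminate|]. split; [discriminate|].
  intros _ _. split.
  - apply (after_check L T l (S_ r) _ (q+1)); auto; lia.
  - intros; lia.
Qed.

Lemma mp L T r q l s : 0 < L -> 0 < l -> (2 <= T)%nat -> NodeInv L T r q l ->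
  qmin r = true -> qmax r = true ->
  ~ (ilen (midpoint_update L l (Y_ r) s) < th L T l) ->
  NodeInv L T (NodeSt (S_ r) (midpoint_update L l (Y_ r) s) (qmin r) (qmax r) (dub r)) (q+1) l.
Proof.
  intros HL Hl HT [HS [H1 [H2 H3]]] Hq HM Hn. destruct (H3 Hq HM) as [Hg _].
  simpl. rewrite Hq, HM. split; [auto|]. split; [discriminate|]. split; [discriminate|].
  intros _ _. split.
  - assert (Hm := mid_len L l (Y_ r) s).
    rewrite Nat.add_1_r. simpl pow.
    assert (Hp : 0 < 2^q) by (apply pow_lt; lra).
    eapply Rle_trans; [|apply Hg]. cbn [Y_]. set (a := ilen (midpoint_update L l (Y_ r) s)) in *. set (b := ilen (Y_ r)) in *. set (p := 2^q) in *. nra.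
  - intros _. cbn [Y_]. apply Rnot_lt_le; exact Hn.
Qed.

Lemma same_part L T st nq nd r' : Inv_gen L T st nq -> In nd (part st) ->
  NodeInv L T r' (nq nd + 1) (node_len nd) ->
  Inv_gen L T (State (part st) (upd (info st) nd r'))
    (fun m => (nq m + if node_eqb nd m then 1 else 0)%nat).
Proof.
  intros [HB HC] Hnd Hr. split.
  - intros m d Hm Hd. simpl in Hm. destruct (HB m d Hm Hd) as [H0 Hn]. split; auto.
    rewrite H0. destruct (node_eqb nd d) eqn:E; auto. apply node_eqb_spec in E; subst; contradiction.
  - intros m Hm. simpl. unfold upd. destruct (node_eqb m nd) eqn:E.
    + apply node_eqb_spec in E; subst. rewrite node_eqb_refl. auto.
    + rewrite (node_eqb_false nd m).
      * rewrite Nat.add_0_r. apply HC; auto.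
      * intro; subst; rewrite node_eqb_refl in E; discriminate.
Qed.

Lemma pow2_add a b : (2 ^ (a + b) = 2 ^ a * 2 ^ b)%nat.
Proof. apply Nat.pow_add_r. Qed.

Lemma pow2_nz a : (2 ^ a <> 0)%nat.
Proof. apply Nat.pow_nonzero; lia. Qed.

Lemma desc_trans a b c : desc a b -> desc b c -> desc a c.
Proof.
  destruct a as [ka ia], b as [kb ib], c as [kc ic]; unfold desc; cbn [fst snd].
  intros [H1 H2] [H3 H4]. split; [lia|].
  replace (kc - ka)%nat with ((kc - kb) + (kb - ka))%nat by lia.
  rewrite pow2_add, <- Nat.div_div by apply pow2_nz. rewrite H4; auto.
Qed.

Lemma desc_irrefl a : ~ desc a a.
Proof. unfold desc; lia. Qed.

Lemma desc_child nd b : b = 0%nat \/ b = 1%nat ->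
  desc nd (S (fst nd), 2 * snd nd + b)%nat.
Proof.
  destruct nd as [k i]; unfold desc; cbn [fst snd]. intros Hb. split; [lia|].
  replace (S k - k)%nat with 1%nat by lia. change (2^1)%nat with 2%nat.
  symmetry; apply (Nat.div_unique _ _ _ b); lia.
Qed.

Lemma desc_parent m nd b : b = 0%nat \/ b = 1%nat ->
  desc m (S (fst nd), 2 * snd nd + b)%nat -> m = nd \/ desc m nd.
Proof.
  destruct m as [km im], nd as [k i]; unfold desc; cbn [fst snd]. intros Hb [H1 H2].
  assert (Hd : ((2 * i + b) / 2 = i)%nat) by (symmetry; apply (Nat.div_unique _ _ _ b); lia).
  destruct (Nat.eq_dec km k) as [->|Hne].
  - left. replace (S k - k)%nat with 1%nat in H2 by lia. change (2^1)%nat with 2%nat in H2. rewrite Hd in H2. subst; auto.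
  - right. split; [lia|].
    replace (S k - km)%nat with (1 + (k - km))%nat in H2 by lia.
    rewrite pow2_add, <- Nat.div_div in H2 by apply pow2_nz. simpl (2^1)%nat in H2.
    rewrite Hd in H2. auto.
Qed.

Lemma node_len_child k i j : node_len (S k, i) * 2 = node_len (k, j).
Proof.
  unfold node_len; simpl. rewrite Rinv_mult. field. apply pow_nonzero; lra.
Qed.

Lemma desc_c1 nd : desc nd (S (fst nd), 2 * snd nd)%nat.
Proof. pose proof (desc_child nd 0 (or_introl eq_refl)) as H. rewrite Nat.add_0_r in H. exact H. Qed.
Lemma desc_c2 nd : desc nd (S (fst nd), 2 * snd nd + 1)%nat.
Proof. exact (desc_child nd 1 (or_intror eq_refl)). Qed.
Lemma par_c1 m nd : desc m (S (fst nd), 2 * snd nd)%nat -> m = nd \/ desc m nd.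
Proof. intros H. apply (desc_parent m nd 0); [auto|]. rewrite Nat.add_0_r. exact H. Qed.
Lemma par_c2 m nd : desc m (S (fst nd), 2 * snd nd + 1)%nat -> m = nd \/ desc m nd.
Proof. apply desc_parent; auto. Qed.

Lemma desc_ne a b : desc a b -> a <> b.
Proof. intros H E; subst; exact (desc_irrefl _ H). Qed.

Lemma child_inv L T nd Y' : 0 < L -> (2 <= T)%nat -> ilen Y' < th L T (node_len nd) ->
  forall b, NodeInv L T (NodeSt Y' Y' false false false) 0 (node_len (S (fst nd), b)).
Proof.
  intros HL HT HY b. destruct nd as [k i].
  pose proof (node_len_child k b i) as E. simpl in HY.
  split; [| split; [intros; auto| split; intros; discriminate]].
  simpl. unfold th, Sb in *. rewrite <- E in HY.
  set (l := node_len (S k, b)) in *. unfold Rmax in *.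
  destruct (Rle_dec (4 * L * (l*2)) (4 * L / INR T)); destruct (Rle_dec (8*L*l) (4 * L / INR T)); lra.
Qed.

Lemma bisect_pres L T st nq nd r' Y' : 0 < L -> (2 <= T)%nat ->
  Inv_gen L T st nq -> In nd (part st) -> ilen Y' < th L T (node_len nd) ->
  Inv_gen L T
    (State ((S (fst nd), 2 * snd nd)%nat :: (S (fst nd), 2 * snd nd + 1)%nat ::
             filter (fun m => negb (node_eqb m nd)) (part st))
       (upd (upd (upd (info st) nd r') (S (fst nd), 2 * snd nd)%nat (NodeSt Y' Y' false false false))
            (S (fst nd), 2 * snd nd + 1)%nat (NodeSt Y' Y' false false false)))
    (fun m => (nq m + if node_eqb nd m then 1 else 0)%nat).
Proof.
  intros HL HT [HB HC] Hnd HY.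
  set (c1 := (S (fst nd), 2 * snd nd)%nat). set (c2 := (S (fst nd), 2 * snd nd + 1)%nat).
  assert (D1 : desc nd c1) by apply desc_c1.
  assert (D2 : desc nd c2) by apply desc_c2.
  assert (Hc12 : c1 <> c2) by (unfold c1, c2; intro E; inversion E; lia).
  assert (Hfil : forall m, In m (filter (fun m => negb (node_eqb m nd)) (part st)) <-> In m (part st) /\ m <> nd).
  { intros m. rewrite filter_In. split.
    - intros [H1 H2]. split; auto. intro; subst. rewrite node_eqb_refl in H2; discriminate.
    - intros [H1 H2]. split; auto. rewrite node_eqb_false; auto. }
  assert (Hnq : forall d, d <> nd -> (nq d + (if node_eqb nd d then 1 else 0) = nq d)%nat).
  { intros d Hd. rewrite node_eqb_false; auto. }
  split.
  - intros m d Hm Hd. simpl in Hm.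
    assert (Hmain : nq d = 0%nat /\ ~ In d (part st) /\ d <> c1 /\ d <> c2).
    { destruct Hm as [<-|[<-|Hm]].
      + assert (Dn : desc nd d) by exact (desc_trans _ _ _ D1 Hd).
        destruct (HB nd d Hnd Dn) as [H1 H2]. repeat split; auto.
        * intro E; subst; exact (desc_irrefl _ Hd).
        * intro E; subst. destruct Hd as [Hd _]. unfold c1, c2 in Hd; simpl in Hd; lia.
      + assert (Dn : desc nd d) by exact (desc_trans _ _ _ D2 Hd).
        destruct (HB nd d Hnd Dn) as [H1 H2]. repeat split; auto.
        * intro E; subst. destruct Hd as [Hd _]. unfold c1, c2 in Hd; simpl in Hd; lia.
        * intro E; subst; exact (desc_irrefl _ Hd).
      + apply Hfil in Hm. destruct Hm as [Hm Hmn].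
        destruct (HB m d Hm Hd) as [H1 H2]. repeat split; auto.
        * intro E; subst. destruct (par_c1 m nd Hd) as [|Hmd]; [contradiction|].
          destruct (HB m nd Hm Hmd); contradiction.
        * intro E; subst. destruct (par_c2 m nd Hd) as [|Hmd]; [contradiction|].
          destruct (HB m nd Hm Hmd); contradiction. }
    destruct Hmain as [H0 [Hn [N1 N2]]].
    assert (d <> nd) by (intro; subst; contradiction).
    split.
    + rewrite Hnq; auto.
    + simpl. intros [E|[E|E]]; try (symmetry in E; contradiction).
      apply Hfil in E; tauto.
  - intros m Hm. simpl in Hm. cbn [info].
    destruct Hm as [<-|[<-|Hm]].
    + assert (c1 <> nd) by (apply not_eq_sym, desc_ne; auto).
      rewrite Hnq by auto. destruct (HB nd c1 Hnd D1) as [-> _].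
      unfold upd. rewrite (node_eqb_false c1 c2) by auto. rewrite node_eqb_refl.
      apply child_inv; auto.
    + assert (c2 <> nd) by (apply not_eq_sym, desc_ne; auto).
      rewrite Hnq by auto. destruct (HB nd c2 Hnd D2) as [-> _].
      unfold upd. rewrite node_eqb_refl.
      apply child_inv; auto.
    + apply Hfil in Hm. destruct Hm as [Hm Hmn].
      assert (m <> c1) by (intro; subst; destruct (HB nd c1 Hnd D1); contradiction).
      assert (m <> c2) by (intro; subst; destruct (HB nd c2 Hnd D2); contradiction).
      rewrite Hnq by auto. unfold upd.
      rewrite !node_eqb_false by auto. apply HC; auto.
Qed.

Lemma Inv_add0 L T st nq : Inv_gen L T st nq -> Inv_gen L T st (fun m => (nq m + 0)%nat).
Proof.
  intros [HB HC]. split.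
  - intros m d Hm Hd. rewrite Nat.add_0_r. destruct (HB m d Hm Hd); split; auto.
  - intros m Hm. rewrite Nat.add_0_r. auto.
Qed.

Lemma step_pres L T st x s nq : 0 < L -> (2 <= T)%nat -> Inv_gen L T st nq ->
  Inv_gen L T (step L T st x s)
    (fun m => (nq m + match cur st x with Some nd' => if node_eqb nd' m then 1 else 0 | None => 0 end)%nat).
Proof.
  intros HL HT HI. unfold step. destruct (cur st x) as [nd|] eqn:Hc.
  2: apply Inv_add0; auto.
  unfold cur in Hc. apply find_some in Hc. destruct Hc as [Hnd _].
  pose proof HI as [HB HC].
  pose proof (HC nd Hnd) as NI.
  pose proof (node_len_pos nd) as Hl.
  cbv zeta.
  destruct (qmin (info st nd)) eqn:Hq.
  - destruct (qmax (info st nd)) eqn:HM.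
    + simpl negb; cbv iota.
      destruct (Rltb _ _) eqn:Hr.
      * unfold Rltb in Hr. destruct (Rlt_dec _ _) as [Hlt|]; [|discriminate].
        apply bisect_pres; auto.
      * unfold Rltb in Hr. destruct (Rlt_dec _ _) as [|Hnlt]; [discriminate|].
        apply same_part; auto. pose proof (mp L T (info st nd) (nq nd) (node_len nd) s HL Hl HT NI Hq HM Hnlt) as Hm. rewrite Hq, HM in Hm. exact Hm.
    + simpl negb; cbv iota. apply same_part; auto. apply ep2; auto.
  - simpl negb; cbv iota. apply same_part; auto.
    destruct NI as [HS [H1 _]]. destruct (H1 Hq) as [_ H0]. rewrite H0. simpl.
    apply ep1; auto. rewrite <- H0. apply HC; auto.
Qed.

Lemma Inv_init L T : 0 < L -> (2 <= T)%nat -> Inv_gen L T (init_state L) (fun _ => 0%nat).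
Proof.
  intros HL HT. assert (Hin : forall m, In m (part (init_state L)) -> fst m = 3%nat).
  { intros m Hm. simpl in Hm. repeat destruct Hm as [<-|Hm]; try reflexivity; contradiction. }
  split.
  - intros m d Hm Hd. split; auto. intro Hd'. apply Hin in Hm. apply Hin in Hd'.
    destruct Hd as [Hd _]. lia.
  - intros m Hm. apply Hin in Hm. destruct m as [k i]. simpl in Hm. subst k.
    split; [|split; [intros; auto|split; intros; discriminate]].
    simpl. unfold ilen, Sb, node_len. simpl. eapply Rle_trans; [|apply Rmax_l]. lra.
Qed.

Lemma Inv_run L T f xs cs n : 0 < L -> (2 <= T)%nat ->
  Inv_gen L T (run L T f xs cs n) (fun m => nqueries L T f xs cs m n).
Proof.
  intros HL HT. induction n.
  - apply Inv_init; auto.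
  - exact (step_pres L T _ _ _ _ HL HT IHn).
Qed.

Lemma ln2_gt : 1/2 < ln 2.
Proof.
  assert (E : exp (1/2) * exp (1/2) = exp 1) by (rewrite <- exp_plus; f_equal; lra).
  assert (H3 := exp_le_3). assert (Hp : 0 < exp (1/2)) by apply exp_pos.
  assert (exp (1/2) < 2) by nra.
  rewrite <- (ln_exp (1/2)). apply ln_increasing; auto.
Qed.

Theorem lemma21 :
  exists c_dub c_ok : R, 0 < c_dub /\ 0 < c_ok /\
  forall (L : R) (T C : nat) (f : R -> R) (xs : nat -> R) (cs : nat -> bool),
    0 < L -> (2 <= T)%nat ->
    (forall x y, 0 <= x <= 1 -> 0 <= y <= 1 -> Rabs (f x - f y) <= L * Rabs (x - y)) ->
    (forall x, 0 <= x <= 1 -> 0 <= f x <= L) ->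
    (forall t, 0 <= xs t <= 1) ->
    (ncorrupt cs T <= C)%nat ->
    forall (nd : node) (n : nat), (n <= T)%nat ->
      let st := run L T f xs cs n in
      let k := INR (nqueries L T f xs cs nd n) in
      (dub (info st nd) = true -> c_dub * ln (INR T) <= k -> ~ is_active st nd) /\
      (dub (info st nd) = false -> c_ok <= k -> ~ is_active st nd).
Proof.
  exists 10, 5. split; [lra|]. split; [lra|].
  intros L T C f xs cs HL HT _ _ _ _ nd n _ st k.
  destruct (Inv_run L T f xs cs n HL HT) as [_ HC].
  assert (HT' := INRT_pos T HT).
  assert (HT2 : 2 <= INR T) by (replace 2 with (INR 2) by (simpl; lra); apply le_INR; auto).
  assert (Hl := node_len_pos nd).
  assert (Hln2 := ln2_gt).
  assert (HlnT : ln 2 <= ln (INR T)).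
  { destruct (Req_dec (INR T) 2) as [E|E]; [rewrite E; lra|]. left. apply ln_increasing; lra. }
  set (q := nqueries L T f xs cs nd n) in *.
  set (l := node_len nd) in *.
  assert (Key : is_active st nd -> (3 <= q)%nat -> (q <= 1)%nat \/ 
     (th L T l / 2 * 2 ^ q <= 4 * (if dub (info st nd) then L else Sb L T l))).
  { intros Ha H3q. destruct (HC nd Ha) as [HS [H1 [H2 H3]]]. change (run L T f xs cs n) with st in H1, H2, H3; change (nqueries L T f xs cs nd n) with q in H1, H2, H3; change (node_len nd) with l in H1, H2, H3.
    destruct (qmin (info st nd)) eqn:Hq.
    2: destruct (H1 eq_refl); lia.
    destruct (qmax (info st nd)) eqn:HM.
    2: left; auto.
    right. destruct (H3 eq_refl eq_refl) as [Hg Hth]. specialize (Hth H3q).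
    assert (Hp : 0 < 2^q) by (apply pow_lt; lra).
    assert (th L T l / 2 <= ilen (Y_ (info st nd)) - 2 * L * l).
    { assert (4 * L * l <= th L T l) by apply Rmax_l. lra. }
    eapply Rle_trans; [|apply Hg]. apply Rmult_le_compat_r; lra. }
  assert (Hth1 : 4 * L * l <= th L T l) by apply Rmax_l.
  assert (Hth2 : 4 * L / INR T <= th L T l) by apply Rmax_r.
  assert (HSb : Sb L T l <= 2 * th L T l).
  { unfold Sb, th, Rmax. destruct (Rle_dec (8 * L * l) (4 * L / INR T));
    destruct (Rle_dec (4 * L * l) (4 * L / INR T));
    assert (0 < 4 * L / INR T) by (apply Rdiv_lt_0_compat; lra);
    assert (0 < L * l) by (apply Rmult_lt_0_compat; lra); lra. }
  assert (Hthp : 0 < th L T l) by (assert (0 < L * l) by (apply Rmult_lt_0_compat; lra); lra).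
  split.
  - intros Hd Hk Ha.
    assert (Hq3 : (3 <= q)%nat).
    { destruct (le_lt_dec 3 q) as [|Hlt]; auto. exfalso.
      assert (INR q <= 2) by (replace 2 with (INR 2) by (simpl; lra); apply le_INR; lia).
      unfold k in Hk. lra. }
    destruct (Key Ha Hq3) as [|Hb]; [lia|]. rewrite Hd in Hb.
    assert (Hpow : 2 ^ q <= 2 * INR T).
    { assert (th L T l * INR T >= 4 * L).
      { unfold Rdiv in Hth2. apply Rle_ge.
        replace (4 * L) with (4 * L * / INR T * INR T) by (field; lra).
        apply Rmult_le_compat_r; lra. }
      assert (Hp : 0 < 2^q) by (apply pow_lt; lra). nra. }
    assert (Hlnp : ln (2 ^ q) <= ln (2 * INR T)).
    { destruct Hpow as [Hlt|Heq]; [left; apply ln_increasing; auto; apply pow_lt; lra|rewrite Heq; lra]. }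
    rewrite ln_pow in Hlnp by lra. rewrite ln_mult in Hlnp by lra.
    unfold k in Hk. fold q in Hk.
    assert (INR q * ln 2 >= 10 * ln (INR T) * ln 2) by nra.
    nra.
  - intros Hd Hk Ha.
    assert (Hq3 : (5 <= q)%nat).
    { destruct (le_lt_dec 5 q) as [|Hlt]; auto. exfalso.
      assert (INR q <= 4) by (replace 4 with (INR 4) by (simpl; lra); apply le_INR; lia).
      unfold k in Hk. lra. }
    destruct (Key Ha ltac:(lia)) as [|Hb]; [lia|]. rewrite Hd in Hb.
    assert (2 ^ 5 <= 2 ^ q) by (apply Rle_pow; lra || lia).
    simpl in H. nra.
Qed.
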